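(* Let $\mathcal S_1=(C,\phi_1,F)$ and $\mathcal S_2=(C,\phi_2,F)$ be two systems with common component set $C=[n]$, semicoherent structure functions $\phi_1,\phi_2$, and common lifetime distribution $F$ having no ties. Suppose that \[ \Pr\big(\mathbf X(t_1)=\mathbf x\text{ and }\mathbf X(t_2)=\mathbf y\big)=\Pr\big(\mathbf X(t_1)=\sigma(\mathbf x)\text{ and }\mathbf X(t_2)=\sigma(\mathbf y)\big) \] for all $\mathbf x,\mathbf y\in\{0,1\}^n$, all $t_1,t_2\ge0$ and all $\sigma\in\mathfrak S_n$. Then for all $t_1,t_2\ge0$, \[ \overline F_{\mathcal S_1,\mathcal S_2}(t_1,t_2)=\sum_{k=1}^n\sum_{l=1}^n s_{k,l}\,\overline F_{k:n,l:n}(t_1,t_2). \]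
   Context: Let $n\ge1$, $C=[n]$, and let $T_1,\ldots,T_n$ be nonnegative random component lifetimes with joint c.d.f. $F$ having no ties. $\mathfrak S_n$ is the symmetric group on $[n]$, and for $\mathbf x\in\{0,1\}^n$, $\sigma(\mathbf x)=(x_{\sigma^{-1}(1)},\ldots,x_{\sigma^{-1}(n)})$. A structure function $\phi\colon\{0,1\}^n\to\{0,1\}$ is semicoherent if nondecreasing in each variable with $\phi(0,\ldots,0)=0$, $\phi(1,\ldots,1)=1$; Boolean vectors are identified with subsets via $x_i=1\iff i\in A$. For $t\ge0$, $X_j(t)=\mathrm{Ind}(T_j>t)$, $\mathbf X(t)=(X_1(t),\ldots,X_n(t))$; the lifetime $T_{\mathcal S}$ of $\mathcal S=(C,\phi,F)$ is the random time with $\phi(\mathbf X(t))=1$ iff $t<T_{\mathcal S}$. $T_{k:n}$ is the $k$-th smallest lifetime. $\overline F_{\mathcal S_1,\mathcal S_2}(t_1,t_2)=\Pr(T_{\mathcal S_1}>t_1\text{ and }T_{\mathcal S_2}>t_2)$ and $\overline F_{k:n,l:n}(t_1,t_2)=\Pr(T_{k:n}>t_1\text{ and }T_{l:n}>t_2)$. The combinatorial joint structure signature $s_{k,l}$ ($k,l\in[n]$) is defined (independently of $F$) by $s_{k,l}=\overline S_{k-1,l-1}-\overline S_{k,l-1}-\overline S_{k-1,l}+\overline S_{k,l}$, where for $k,l\in\{0,\ldots,n\}$, \[ \overline S_{k,l}=\sum_{A\subseteq C,\ |A|=n-k}\ \sum_{B\subseteq C,\ |B|=n-l}q_0(A,B)\,\phi_1(A)\,\phi_2(B),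 \] and \[ q_0(A,B)=\begin{cases}\frac{(n-|A|)!\,(|A|-|B|)!\,|B|!}{n!} & \text{if } B\subseteq A,\\[2pt] \frac{(n-|B|)!\,(|B|-|A|)!\,|A|!}{n!} & \text{if } A\subseteq B,\\[2pt] 0 & \text{otherwise.}\end{cases} \] *)

(* Defs.v *)
From HB Require Import structures.
From mathcomp Require Import all_boot all_order all_algebra all_fingroup.
Set Implicit Arguments. Unset Strict Implicit. Unset Printing Implicit Defensive.
Import Order.TTheory GRing.Theory Num.Theory.
Local Open Scope ring_scope.

(* Every genuine probability space (restricted to its measurable events)
   satisfies this, so the theorem stated with it is (at least) as strong. *)
Definition fa_prob (R : realFieldType) (Ω : Type)
  (M : (Ω -> bool) -> Prop) (Pr : (Ω -> bool) -> R) : Prop :=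
  M (fun _ => true) /\
  (forall E, M E -> M (fun w => ~~ E w)) /\
  (forall E F, M E -> M F -> M (fun w => E w || F w)) /\
  (forall E, M E -> 0 <= Pr E) /\
  Pr (fun _ => true) = 1 /\
  (forall E F, M E -> M F -> (forall w, ~~ (E w && F w)) ->
     Pr (fun w => E w || F w) = Pr E + Pr F) /\
  (forall E F, (forall w, E w = F w) -> Pr E = Pr F).

(* X(t) as a subset of C = 'I_n : the set of components alive at time t *)
Definition Xt (R : realFieldType) (Ω : Type) (n : nat)
  (T : 'I_n -> Ω -> R) (t : R) (w : Ω) : {set 'I_n} :=
  [set j | t < T j w].

(* semicoherent structure function (Boolean vectors identified with subsets) *)
Definition semicoherent (n : nat) (phi : {set 'I_n} -> bool) : Prop :=
  (forall (A : {set 'I_n}) (i : 'I_n), phi A ==> phi (i |: A)) /\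
  phi set0 = false /\ phi setT = true.

Definition is_lifetime (R : realFieldType) (Ω : Type) (n : nat)
  (phi : {set 'I_n} -> bool) (T : 'I_n -> Ω -> R) (TS : Ω -> R) : Prop :=
  forall w t, 0 <= t -> phi (Xt T t w) = (t < TS w).

(* T_{k:n}: the k-th smallest lifetime (k >= 1) *)
Definition ostat (R : realFieldType) (Ω : Type) (n : nat)
  (T : 'I_n -> Ω -> R) (k : nat) (w : Ω) : R :=
  nth 0 (sort <=%R [seq T j w | j : 'I_n]) k.-1.

Definition ties_event (R : realFieldType) (Ω : Type) (n : nat)
  (T : 'I_n -> Ω -> R) : Ω -> bool :=
  fun w => [exists i : 'I_n, exists j : 'I_n, (i != j) && (T i w == T j w)].

Definition q0 (R : realFieldType) (n : nat) (A B : {set 'I_n}) : R :=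
  if B \subset A then
    ((n - #|A|)`! * (#|A| - #|B|)`! * #|B|`!)%:R / (n`!)%:R
  else if A \subset B then
    ((n - #|B|)`! * (#|B| - #|A|)`! * #|A|`!)%:R / (n`!)%:R
  else 0.

Definition Sbar (R : realFieldType) (n : nat)
  (phi1 phi2 : {set 'I_n} -> bool) (k l : nat) : R :=
  \sum_(A : {set 'I_n} | #|A| == (n - k)%N)
    \sum_(B : {set 'I_n} | #|B| == (n - l)%N)
      q0 R A B * (phi1 A)%:R * (phi2 B)%:R.

Definition jsig (R : realFieldType) (n : nat)
  (phi1 phi2 : {set 'I_n} -> bool) (k l : nat) : R :=
  Sbar R phi1 phi2 k.-1 l.-1 - Sbar R phi1 phi2 k l.-1
  - Sbar R phi1 phi2 k.-1 l + Sbar R phi1 phi2 k l.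

(* Main.v *)
Require Import Defs.
From HB Require Import structures.
From mathcomp Require Import all_boot all_order all_algebra all_fingroup.
From Stdlib Require Import Lia FunctionalExtensionality.
From mathcomp Require Import zify.
Import Order.TTheory GRing.Theory Num.Theory.
Set Implicit Arguments. Unset Strict Implicit.

Lemma mem_im_perm (T : finType) (s : {perm T}) (S : {set T}) z :
  (z \in s @: S) = ((s^-1)%g z \in S).
Proof. by rewrite -{1}(invgK s) im_permV inE. Qed.

Lemma perm_move (T : finType) (D X Y : {set T}) : X \subset D -> Y \subset D ->
  #|X| = #|Y| -> exists s : {perm T}, perm_on D s /\ s @: X = Y.
Proof.
move=> XD YD.
move: {2}#|X :\: Y| (leqnn #|X :\: Y|) => k.
elim: k X XD => [|k IH] X XD Hk cXY.
  exists 1%g; split; first exact: perm_on1.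
  rewrite imset_perm1; apply/eqP; rewrite eqEcard cXY leqnn andbT.
  by rewrite -setD_eq0 -cards_eq0 -leqn0.
case: (set_0Vmem (X :\: Y)) => [E|[x Hx]].
  apply: (IH X XD _ cXY); by rewrite E cards0.
have cD : #|Y :\: X| = #|X :\: Y|.
  by apply/eqP; rewrite -(eqn_add2l #|Y :&: X|) cardsID setIC cardsID cXY.
have [y Hy] : exists y, y \in Y :\: X.
  apply/set0Pn; rewrite -cards_eq0 cD cards_eq0; apply/set0Pn; by exists x.
move: Hx Hy; rewrite !inE => /andP[xY xX] /andP[yX yY].
set t := tperm x y.
have tD : perm_on D t.
  apply: subset_trans (tperm_on x y) _; apply/subsetP=> z; rewrite !inE.
  by case/orP=> /eqP->; [apply: (subsetP XD)|apply: (subsetP YD)].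
have X'D : t @: X \subset D.
  apply/subsetP=> z; rewrite mem_im_perm /t tpermV => Hz.
  by rewrite -(perm_closed _ tD) (subsetP XD).
have Hlt : #|t @: X :\: Y| <= k.
  have : #|t @: X :\: Y| <= #|(X :\: Y) :\ x|.
    apply: subset_leq_card; apply/subsetP=> z; rewrite !inE mem_im_perm /t tpermV.
    case/andP=> zY; case: tpermP zY => [->|->|/eqP zx /eqP zy] zY.
    - by rewrite (negbTE yX).
    - by rewrite yY in zY.
    - by rewrite zx zY => ->.
  rewrite (cardsD1 x) !inE xY xX /= add1n in Hk. move=> H; apply: leq_trans H _.
  by rewrite -ltnS.
have [s' [s'D s'X]] := IH _ X'D Hlt (etrans (card_imset _ (@perm_inj _ t)) cXY).
exists (t * s')%g; split; first exact: perm_onM.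
rewrite -s'X -imset_comp; apply: eq_imset => z; by rewrite permM.
Qed.

Lemma perm_move2 (T : finType) (A B A' B' : {set T}) : B \subset A -> B' \subset A' ->
  #|A| = #|A'| -> #|B| = #|B'| -> exists s : {perm T}, s @: A = A' /\ s @: B = B'.
Proof.
move=> BA BA' cA cB.
have [s1 [_ s1A]] := perm_move (subsetT A) (subsetT A') cA.
have s1B : s1 @: B \subset A' by rewrite -s1A imsetS.
have [s2 [s2A s2B]] := perm_move s1B BA' (etrans (card_imset _ (@perm_inj _ s1)) cB).
exists (s1 * s2)%g; split.
  by rewrite -[in RHS](im_perm_on s2A) -s1A -imset_comp; apply: eq_imset => z; rewrite permM.
by rewrite -s2B -imset_comp; apply: eq_imset => z; rewrite permM.
Qed.

Local Open Scope ring_scope.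

Lemma count_nested (n : nat) (R : realFieldType) (A' : {set 'I_n}) b :
  \sum_(B' : {set 'I_n} | #|B'| == b) (B' \subset A')%:R = ('C(#|A'|, b))%:R :> R.
Proof.
rewrite -cards_draws -sum1_card natr_sum [RHS]big_mkcond [LHS]big_mkcond.
apply: eq_bigr => B' _; rewrite inE.
by case: (B' \subset A'); case: (#|B'| == b).
Qed.

Lemma key (R : realFieldType) (n : nat) (P : {set 'I_n} -> {set 'I_n} -> R) :
  (forall A B : {set 'I_n}, ~~ (B \subset A) -> P A B = 0) ->
  (forall (A B : {set 'I_n}) (s : {perm 'I_n}), P (s @: A) (s @: B) = P A B) ->
  forall A B, P A B = q0 R A B *
    \sum_(A' : {set 'I_n} | #|A'| == #|A|) \sum_(B' : {set 'I_n} | #|B'| == #|B|) P A' B'.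
Proof.
move=> P0 Pinv A B.
case BA: (B \subset A).
  have -> : \sum_(A' : {set 'I_n} | #|A'| == #|A|) \sum_(B' : {set 'I_n} | #|B'| == #|B|) P A' B'
     = P A B * \sum_(A' : {set 'I_n} | #|A'| == #|A|) \sum_(B' : {set 'I_n} | #|B'| == #|B|) (B' \subset A')%:R.
    rewrite mulr_sumr; apply: eq_bigr => A' /eqP cA.
    rewrite mulr_sumr; apply: eq_bigr => B' /eqP cB.
    case B'A': (B' \subset A'); last by rewrite mulr0 P0 ?B'A'.
    have [s [sA sB]] := perm_move2 BA B'A' (esym cA) (esym cB).
    by rewrite mulr1 -sA -sB Pinv.
  have -> : \sum_(A' : {set 'I_n} | #|A'| == #|A|) \sum_(B' : {set 'I_n} | #|B'| == #|B|) (B' \subset A')%:R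
     = ('C(n, #|A|) * 'C(#|A|, #|B|))%:R :> R.
    rewrite (eq_bigr (fun _ => ('C(#|A|, #|B|))%:R)); last first.
      by move=> A' /eqP <-; rewrite count_nested.
    rewrite sumr_const natrM mulrC mulr_natr; congr (_ *+ _).
    have := card_draws 'I_n #|A|; rewrite card_ord => <-.
    by apply: eq_card => X; rewrite inE.
  rewrite mulrCA; apply: esym; rewrite -[RHS]mulr1; congr (_ * _).
  rewrite /q0 BA mulrAC -natrM.
  have leA : (#|A| <= n)%N by rewrite -[X in (_ <= X)%N](card_ord n) max_card.
  have leB : (#|B| <= #|A|)%N by apply: subset_leq_card.
  have -> : ((n - #|A|)`! * (#|A| - #|B|)`! * #|B|`! * ('C(n, #|A|) * 'C(#|A|, #|B|)))%N = n`!.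
    rewrite -(bin_fact leA) -(bin_fact leB).
    set x := (n - #|A|)`!; set y := (#|A| - #|B|)`!; set z := #|B|`!.
    set u := 'C(n, #|A|); set v := 'C(#|A|, #|B|).
    nia.
  by rewrite mulfV // pnatr_eq0 -lt0n fact_gt0.
rewrite P0 ?BA //.
rewrite /q0 BA.
case AB: (A \subset B); last by rewrite mul0r.
rewrite big1 ?mulr0 // => A' /eqP cA; rewrite big1 // => B' /eqP cB.
apply: P0; apply/negP => /subset_leq_card; rewrite cA cB.
have : A \proper B by rewrite properE AB BA.
by move/proper_card; rewrite ltnNge => /negbTE ->.
Qed.

Section Prob.
Variables (R : realFieldType) (Ω : Type) (M : (Ω -> bool) -> Prop) (Pr : (Ω -> bool) -> R).
Hypothesis HP : fa_prob M Pr.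

Lemma M_true : M (fun _ => true). Proof. by case: HP. Qed.
Lemma M_neg E : M E -> M (fun w => ~~ E w). Proof. by case: HP => _ [H _]; apply: H. Qed.
Lemma M_or E F : M E -> M F -> M (fun w => E w || F w). Proof. by case: HP => _ [_ [H _]]; apply: H. Qed.
Lemma Pr_ext E F : (forall w, E w = F w) -> Pr E = Pr F.
Proof. by case: HP => _ [_ [_ [_ [_ [_ H]]]]]; apply: H. Qed.
Lemma Pr_add E F : M E -> M F -> (forall w, ~~ (E w && F w)) ->
     Pr (fun w => E w || F w) = Pr E + Pr F.
Proof. by case: HP => _ [_ [_ [_ [_ [H _]]]]]; apply: H. Qed.

Lemma M_false : M (fun _ => false).
Proof. exact: (M_neg M_true). Qed.

Lemma M_and E F : M E -> M F -> M (fun w => E w && F w).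
Proof.
move=> HE HF; have := M_neg (M_or (M_neg HE) (M_neg HF)).
have -> : (fun w => ~~ (~~ E w || ~~ F w)) = (fun w => E w && F w).
  by apply: functional_extensionality => w; rewrite negb_or !negbK.
done.
Qed.

Lemma M_ext E F : (forall w, E w = F w) -> M E -> M F.
Proof. by move=> H; have -> : E = F by apply: functional_extensionality. Qed.

Lemma Pr_false : Pr (fun _ => false) = 0.
Proof.
have := Pr_add M_false M_false (fun _ => isT).
rewrite (@Pr_ext (fun w => false || false) (fun _ => false)) // => H.
by apply: (@addrI _ (Pr (fun _ => false))); rewrite addr0 -H.
Qed.

Lemma M_all (I : Type) (F : I -> Ω -> bool) (s : seq I) :
  (forall i, M (F i)) -> M (fun w => all (fun i => F i w) s).
Proof.
move=> HF; elim: s => [|x s IH] /=; first exact: M_true.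
exact: M_and.
Qed.

Lemma M_has (I : Type) (F : I -> Ω -> bool) (s : seq I) :
  (forall i, M (F i)) -> M (fun w => has (fun i => F i w) s).
Proof.
move=> HF; elim: s => [|x s IH] /=; first exact: M_false.
exact: M_or.
Qed.

Lemma Pr_has (I : eqType) (E : I -> Ω -> bool) (s : seq I) :
  uniq s -> (forall i, M (E i)) -> (forall i j w, E i w -> E j w -> i = j) ->
  Pr (fun w => has (fun i => E i w) s) = \sum_(i <- s) Pr (E i).
Proof.
move=> + HM Hu; elim: s => [|x s IH] /=.
  by rewrite big_nil Pr_false.
move=> /andP[xs us]; rewrite big_cons -IH //.
apply: Pr_add => //; first exact: M_has.
move=> w; apply/negP => /andP[Ex /hasP[j js Ej]].
by move: xs; rewrite (Hu _ _ _ Ex Ej) js.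
Qed.

End Prob.

Lemma nth_sorted (R : realFieldType) (t : R) (s : seq R) (i : nat) :
  sorted <=%R s -> (i < size s)%N ->
  (t < nth 0 s i) = (size s - count (fun x : R => (t < x)%R) s <= i)%N.
Proof.
elim: s i => [|x s IH] i //= Hs Hi.
have allx := order_path_min (@le_trans _ R) Hs.
have ss := path_sorted Hs.
have cs := count_size (fun x : R => (t < x)%R) s.
case tx: (t < x)%R.
  have -> : count (fun x => t < x) s = size s.
    apply/eqP; rewrite -all_count; apply/allP => y ys.
    by apply: (lt_le_trans tx); apply: (allP allx).
  case: i Hi => [|i] Hi /=; first by rewrite tx; lia.
  have : x <= nth 0 s i by apply: (allP allx); rewrite mem_nth.
  move/(lt_le_trans tx) => ->; lia.
case: i Hi => [|i] Hi /=.
  rewrite tx; lia.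
rewrite IH //; lia.
Qed.

Lemma ostat_gt (R : realFieldType) (Ω : Type) n (T : 'I_n -> Ω -> R) k t w :
  (0 < k <= n)%N -> (t < ostat T k w) = (n - k < #|Xt T t w|)%N.
Proof.
rewrite /ostat => /andP[k0 kn].
set s := [seq T j w | j : 'I_n].
have ss : size (sort <=%R s) = n by rewrite size_sort size_map size_enum_ord.
rewrite nth_sorted ?sort_sorted ?ss; [|by []|move=> a b; apply: real_leVge; apply: num_real| lia].
have -> : count (fun x => t < x) (sort <=%R s) = #|Xt T t w|.
  rewrite ((seq.permP (permEl (perm_sort _ _))) (fun x => t < x)) count_map /Xt cardsE cardE /enum_mem size_filter count_filter.
  by apply: eq_count => x; rewrite /= andbT.

lia.
Qed.

Lemma tele1 (R : realFieldType) (f : nat -> R) n m : (m <= n)%N ->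
  \sum_(1 <= k < n.+1) (f k.-1 - f k) * (m < k)%:R = f m - f n.
Proof.
move=> mn; rewrite big_add1 /= (@big_cat_nat _ _ _ m) /=; last by []; last by [].
rewrite big_nat_cond big1 ?add0r; last first.
  by move=> k /andP[/andP[_ km] _]; rewrite ltnS leqNgt km mulr0.
rewrite (eq_big_nat _ _ (F2 := fun k => - (f k.+1 - f k))); last first.
  by move=> k /andP[mk _]; rewrite ltnS mk mulr1 opprB.
by rewrite sumrN telescope_sumr // opprB.
Qed.

Lemma tele2 (R : realFieldType) (X : nat -> nat -> R) n m p :
  (m <= n)%N -> (p <= n)%N -> (forall l, X n l = 0) -> (forall k, X k n = 0) ->
  \sum_(1 <= k < n.+1) \sum_(1 <= l < n.+1)
     (X k.-1 l.-1 - X k l.-1 - X k.-1 l + X k l) * ((m < k)%N && (p < l)%N)%:R = X m p.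
Proof.
move=> mn pn Xn1 Xn2.
rewrite (eq_big_nat _ _ (F2 := fun k => (X k.-1 p - X k p) * (m < k)%:R)).
  by rewrite tele1 // Xn1 subr0.
move=> k _.
rewrite (eq_big_nat _ _ (F2 := fun l => ((X k.-1 l.-1 - X k l.-1) - (X k.-1 l - X k l)) * (p < l)%:R * (m < k)%:R)).
  rewrite -mulr_suml (tele1 (fun l => X k.-1 l - X k l)) //.
  by rewrite !Xn2 subrr subr0.
move=> l _.
rewrite -mulrA; congr (_ * _).
  by rewrite opprB addrA addrAC.
by case: (m < k)%N; case: (p < l)%N; rewrite ?mulr0 ?mulr1.
Qed.

Lemma swap2 (R : realFieldType) (I : finType) (c : I -> I -> bool) (f g : I -> R) :
  (forall x y, c x y = c y x) ->
  \sum_x f x * \sum_(y | c x y) g y = \sum_y g y * \sum_(x | c y x) f x.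
Proof.
move=> cs.
have E : forall (f g : I -> R) x, f x * \sum_(y | c x y) g y = \sum_y (c x y)%:R * (f x * g y).
  move=> f' g' x; rewrite mulr_sumr big_mkcond; apply: eq_bigr => y _.
  by case: (c x y); rewrite ?mul1r ?mul0r ?mulr0.
rewrite (eq_bigr _ (fun x _ => E f g x)) exchange_big /=.
apply: eq_bigr => y _; rewrite E; apply: eq_bigr => x _.
by rewrite cs [f x * _]mulrC.
Qed.

Lemma swap4 (R : realFieldType) (n : nat) (f g : {set 'I_n} -> {set 'I_n} -> R) :
  \sum_A \sum_B f A B * (\sum_(A' : {set 'I_n} | #|A'| == #|A|) \sum_(B' : {set 'I_n} | #|B'| == #|B|) g A' B')
  = \sum_A \sum_B g A B * (\sum_(A' : {set 'I_n} | #|A'| == #|A|) \sum_(B' : {set 'I_n} | #|B'| == #|B|) f A' B').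
Proof.
  have P : forall (h : {set 'I_n} -> {set 'I_n} -> R) (A B : {set 'I_n}),
   (\sum_(A' : {set 'I_n} | #|A'| == #|A|) \sum_(B' : {set 'I_n} | #|B'| == #|B|) h A' B')
   = \sum_(q : {set 'I_n} * {set 'I_n} | (#|q.1| == #|A|) && (#|q.2| == #|B|)) h q.1 q.2.
  by move=> h A B; rewrite (pair_big (fun A' : {set 'I_n} => #|A'| == #|A|) (fun B' : {set 'I_n} => #|B'| == #|B|) h).
under eq_bigr do under eq_bigr do rewrite P.
rewrite (pair_big xpredT xpredT (fun A B => f A B * _)) /=.
under [RHS]eq_bigr do under eq_bigr do rewrite P.
rewrite (pair_big xpredT xpredT (fun A B => g A B * _)) /=.
rewrite (@swap2 R _ (fun p q : {set 'I_n} * {set 'I_n} => (#|q.1| == #|p.1|) && (#|q.2| == #|p.2|))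
          (fun p => f p.1 p.2) (fun p => g p.1 p.2)) //.
by move=> x y; rewrite (eq_sym #|x.1|) (eq_sym #|x.2|).
Qed.

Lemma q0_sym (R : realFieldType) n (A B : {set 'I_n}) : q0 R A B = q0 R B A.
Proof.
rewrite /q0; case BA: (B \subset A); case AB: (A \subset B) => //.
by have /eqP -> : A == B by rewrite eqEsubset AB BA.
Qed.

Lemma Sbar_n1 (R : realFieldType) n phi1 phi2 l : semicoherent phi1 ->
  Sbar R (n:=n) phi1 phi2 n l = 0.
Proof.
move=> [_ [p0 _]]; rewrite /Sbar big1 // => A; rewrite subnn cards_eq0 => /eqP ->.
by rewrite big1 // => B _; rewrite p0 mulr0 mul0r.
Qed.

Lemma Sbar_n2 (R : realFieldType) n phi1 phi2 k : semicoherent phi2 ->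
  Sbar R (n:=n) phi1 phi2 k n = 0.
Proof.
move=> [_ [p0 _]]; rewrite /Sbar big1 // => A _; rewrite big1 // => B.
by rewrite subnn cards_eq0 => /eqP ->; rewrite p0 mulr0.
Qed.

Section Main.
Variables (R : realFieldType) (Ω : Type) (n : nat)
  (M : (Ω -> bool) -> Prop) (Pr : (Ω -> bool) -> R) (T : 'I_n -> Ω -> R).
Hypothesis HP : fa_prob M Pr.
Hypothesis MT : forall j t, M (fun w => t < T j w).

Lemma M_X t (A : {set 'I_n}) : M (fun w => Xt T t w == A).
Proof.
apply: (M_ext (E := fun w => all (fun j => (t < T j w) == (j \in A)) (enum 'I_n))).
  move=> w; apply/allP/eqP => [H | <- j _]; last by rewrite /Xt inE.
  by apply/setP => j; rewrite /Xt inE; apply/eqP; apply: H; rewrite mem_enum.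
apply: (M_all HP) => j; case: (j \in A).
  by apply: (M_ext _ (MT j t)) => w; rewrite eqb_id.
by apply: (M_ext _ (M_neg HP (MT j t))) => w; rewrite eqbF_neg.
Qed.

Variables t1 t2 : R.
Definition PP (A B : {set 'I_n}) := Pr (fun w => (Xt T t1 w == A) && (Xt T t2 w == B)).

Lemma Gsum (Q : {set 'I_n} -> {set 'I_n} -> bool) :
  Pr (fun w => Q (Xt T t1 w) (Xt T t2 w)) = \sum_A \sum_B (Q A B)%:R * PP A B.
Proof.
pose E (p : {set 'I_n} * {set 'I_n}) w := (Xt T t1 w == p.1) && (Xt T t2 w == p.2).
rewrite (Pr_ext HP (F := fun w => has (fun p => E p w)
            (enum (fun p : {set 'I_n} * {set 'I_n} => Q p.1 p.2)))); last first.
  move=> w; apply/idP/hasP => [HQ | [p pin /andP[/eqP e1 /eqP e2]]].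
    by exists (Xt T t1 w, Xt T t2 w); rewrite ?mem_enum ?inE //= /E /= !eqxx.
  by move: pin; rewrite mem_enum e1 e2.
rewrite (Pr_has HP); first last.
- by move=> [A B] [A2 B2] w; rewrite /E /= => /andP[/eqP <- /eqP <-] /andP[/eqP <- /eqP <-].
- by move=> p; apply: (M_and HP); apply: M_X.
- exact: enum_uniq.
rewrite big_enum /= (pair_big xpredT xpredT (fun A B => (Q A B)%:R * PP A B)) /=.
rewrite big_mkcond /=; apply: eq_bigr => p _.
by rewrite unfold_in /=; case: (Q p.1 p.2); rewrite ?mul1r ?mul0r.
Qed.

Hypothesis t1p : 0 <= t1.
Hypothesis t2p : 0 <= t2.
Hypothesis Hinv : forall (A B : {set 'I_n}) (t1 t2 : R) (s : {perm 'I_n}),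
     0 <= t1 -> 0 <= t2 ->
     Pr (fun w => (Xt T t1 w == A) && (Xt T t2 w == B)) =
     Pr (fun w => (Xt T t1 w == s @: A) && (Xt T t2 w == s @: B)).

Lemma keyPP (A B : {set 'I_n}) : PP A B = q0 R A B *
  \sum_(A2 : {set 'I_n} | #|A2| == #|A|) \sum_(B2 : {set 'I_n} | #|B2| == #|B|) PP A2 B2.
Proof.
have inv : forall (A B : {set 'I_n}) (s : {perm 'I_n}), PP (s @: A) (s @: B) = PP A B.
  by move=> A' B' s; rewrite /PP -Hinv.
case: (boolP (t1 <= t2)) => h.
  apply: key => // A' B' nBA.
  rewrite /PP (Pr_ext HP (F := fun _ => false)) ?(Pr_false HP) //.
  move=> w; apply/negbTE/negP => /andP[/eqP e1 /eqP e2]; apply: (negP nBA).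
  rewrite -e1 -e2; apply/subsetP => j; rewrite /Xt !inE => tj.
  exact: le_lt_trans h tj.
have h' : t2 <= t1 by move: h; rewrite -real_ltNge ?num_real // => /ltW.
have K := @key R n (fun A B => PP B A) _ _ B A.
rewrite K; [rewrite q0_sym exchange_big //| |].
  move=> A' B' nBA.
  rewrite /PP (Pr_ext HP (F := fun _ => false)) ?(Pr_false HP) //.
  move=> w; apply/negbTE/negP => /andP[/eqP e1 /eqP e2]; apply: (negP nBA).
  rewrite -e1 -e2; apply/subsetP => j; rewrite /Xt !inE => tj.
  exact: le_lt_trans h' tj.
by move=> A' B' s; apply: inv.
Qed.

End Main.

Unset Implicit Arguments. Set Strict Implicit.

Lemma exch (R : realFieldType) (I : finType) (r1 r2 : seq nat) (a : nat -> nat -> R)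
   (c : nat -> nat -> I -> R) (P : I -> R) :
  \sum_(k <- r1) \sum_(l <- r2) a k l * (\sum_i c k l i * P i) =
  \sum_i P i * (\sum_(k <- r1) \sum_(l <- r2) a k l * c k l i).
Proof.
under eq_bigr do under eq_bigr do rewrite mulr_sumr.
under eq_bigr do rewrite exchange_big /=.
rewrite exchange_big /=; apply: eq_bigr => i _.
rewrite mulr_sumr; apply: eq_bigr => k _; rewrite mulr_sumr; apply: eq_bigr => l _.
by rewrite mulrA mulrC.
Qed.

Theorem proposition12 (R : realFieldType) (Ω : Type) (n : nat)
  (M : (Ω -> bool) -> Prop) (Pr : (Ω -> bool) -> R)
  (T : 'I_n -> Ω -> R) (phi1 phi2 : {set 'I_n} -> bool) (TS1 TS2 : Ω -> R) :
  (0 < n)%N ->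
  fa_prob M Pr ->
  (forall j t, M (fun w => t < T j w)) ->
  (forall j w, 0 <= T j w) ->
  M (ties_event T) -> Pr (ties_event T) = 0 ->
  semicoherent phi1 -> semicoherent phi2 ->
  is_lifetime phi1 T TS1 -> is_lifetime phi2 T TS2 ->
  (forall (A B : {set 'I_n}) (t1 t2 : R) (s : {perm 'I_n}),
     0 <= t1 -> 0 <= t2 ->
     Pr (fun w => (Xt T t1 w == A) && (Xt T t2 w == B)) =
     Pr (fun w => (Xt T t1 w == s @: A) && (Xt T t2 w == s @: B))) ->
  forall t1 t2 : R, 0 <= t1 -> 0 <= t2 ->
    Pr (fun w => (t1 < TS1 w) && (t2 < TS2 w)) =
    \sum_(1 <= k < n.+1) \sum_(1 <= l < n.+1)
       jsig R phi1 phi2 k l *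
       Pr (fun w => (t1 < ostat T k w) && (t2 < ostat T l w)).
Proof.
move=> n0 HP MT T0 Mties Pties sc1 sc2 L1 L2 Hinv t1 t2 t1p t2p.
set P := PP Pr T t1 t2.
have -> : Pr (fun w => (t1 < TS1 w) && (t2 < TS2 w)) =
    \sum_A \sum_B (phi1 A && phi2 B)%:R * P A B.
  rewrite -(Gsum HP MT t1 t2 (fun A B => phi1 A && phi2 B)).
  by apply: (Pr_ext HP) => w; rewrite L1 // L2.
have RHSk : forall k l, (0 < k <= n)%N -> (0 < l <= n)%N ->
    Pr (fun w => (t1 < ostat T k w) && (t2 < ostat T l w)) =
    \sum_(A : {set 'I_n}) \sum_(B : {set 'I_n}) ((n - k < #|A|)%N && (n - l < #|B|)%N)%:R * P A B.
  move=> k l hk hl.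
  rewrite -(Gsum HP MT t1 t2 (fun A B => (n - k < #|A|)%N && (n - l < #|B|)%N)).
  by apply: (Pr_ext HP) => w; rewrite !ostat_gt.
under eq_big_nat => k hk do under eq_big_nat => l hl do rewrite (RHSk k l hk hl).
have cardI : forall A : {set 'I_n}, (#|A| <= n)%N.
  by move=> A; rewrite -[X in (_ <= X)%N](card_ord n) max_card.
have E2 : \sum_(1 <= k < n.+1) \sum_(1 <= l < n.+1) jsig R phi1 phi2 k l *
    (\sum_(A : {set 'I_n}) \sum_(B : {set 'I_n}) ((n - k < #|A|)%N && (n - l < #|B|)%N)%:R * P A B)
    = \sum_(A : {set 'I_n}) \sum_(B : {set 'I_n}) P A B * Sbar R phi1 phi2 (n - #|A|) (n - #|B|).
  transitivity (\sum_(1 <= k < n.+1) \sum_(1 <= l < n.+1) jsig R phi1 phi2 k l *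
    (\sum_(p : {set 'I_n} * {set 'I_n}) ((n - k < #|p.1|)%N && (n - l < #|p.2|)%N)%:R * P p.1 p.2)).
    apply: eq_big_nat => k _; apply: eq_big_nat => l _; congr (_ * _).
    exact: (pair_big xpredT xpredT (fun (A B : {set 'I_n}) => ((n - k < #|A|)%N && (n - l < #|B|)%N)%:R * P A B)).
  rewrite exch (pair_big xpredT xpredT (fun (A B : {set 'I_n}) => P A B * Sbar R phi1 phi2 (n - #|A|) (n - #|B|))) /=.
  apply: eq_bigr => [[A B]] _ /=; congr (_ * _).
  rewrite -(tele2 (X := Sbar R phi1 phi2) (n := n) (m := (n - #|A|)%N) (p := (n - #|B|)%N)) ?leq_subr //;
    last first.
  - by move=> k; apply: Sbar_n2.
  - by move=> l; apply: Sbar_n1.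
  apply: eq_big_nat => k /andP[k1 kn]; apply: eq_big_nat => l /andP[l1 ln].
  rewrite /jsig; congr (_ * _%:R).
  have cA := cardI A; have cB := cardI B.
  have -> : (n - k < #|A|)%N = (n - #|A| < k)%N by apply/idP/idP => ?; lia.
  have -> : (n - l < #|B|)%N = (n - #|B| < l)%N by apply/idP/idP => ?; lia.
  done.
rewrite E2.
under [RHS]eq_bigr => A _ do under eq_bigr => B _ do rewrite /Sbar !subKn ?cardI //.
rewrite (swap4 P (fun A B => q0 R A B * (phi1 A)%:R * (phi2 B)%:R)).
apply: eq_bigr => A _; apply: eq_bigr => B _.
have K := keyPP HP t1p t2p Hinv A B; rewrite -/P in K; rewrite {1}K.
case: (phi1 A); case: (phi2 B); rewrite /= ?mul1r ?mulr1 ?mul0r ?mulr0. all: try reflexivity. all: by rewrite mul0r.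
Qed.
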